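(* Let $q$ be a prime power and $0\le t\le s$. If an invertible $s\times s$ matrix $M$ over $\mathbb{F}_q$ defines a linear $(t,s,q)$-AONT (i.e. every $t\times t$ submatrix of $M$ is invertible), then $M^{-1}$ defines a linear $(s-t,s,q)$-AONT (i.e. every $(s-t)\times(s-t)$ submatrix of $M^{-1}$ is invertible).
   Context: A linear $(t,s,q)$-AONT over $\mathbb{F}_q$ is given by an invertible $s\times s$ matrix $M$ over $\mathbb{F}_q$, the transform being $(y_1,\dots,y_s)=(x_1,\dots,x_s)M^{-1}$; $M$ defines a linear $(t,s,q)$-AONT iff every $t\times t$ submatrix of $M$ is invertible (a $0\times0$ submatrix counts as invertible). *)

(* Defs.v *)
From mathcomp Require Import all_boot all_order all_algebra all_field.
Set Implicit Arguments. Unset Strict Implicit. Unset Printing Implicit Defensive.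
Import GRing.Theory.
Local Open Scope ring_scope.

Definition submx_of (F : fieldType) (s t : nat) (I J : {set 'I_s})
  (hI : #|I| = t) (hJ : #|J| = t) (M : 'M[F]_s) : 'M[F]_t :=
  mxsub (fun i : 'I_t => enum_val (cast_ord (esym hI) i))
        (fun j : 'I_t => enum_val (cast_ord (esym hJ) j)) M.

Definition linear_AONT (F : fieldType) (t s : nat) (M : 'M[F]_s) : Prop :=
  M \in unitmx /\
  forall (I J : {set 'I_s}) (hI : #|I| = t) (hJ : #|J| = t),
    submx_of hI hJ M \in unitmx.

(* Main.v *)
Require Import Defs.
From mathcomp Require Import all_boot all_order all_algebra all_field.
Local Open Scope ring_scope.
Import GRing.Theory.

Lemma sing_sub (F : fieldType) n (I J : {set 'I_n}) k (hI : #|I| = k)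
  (hJ : #|J| = k) (A : 'M[F]_n) (y : 'rV_n) :
  y != 0 -> (forall j, j \notin I -> y 0 j = 0) ->
  (forall j, j \in J -> (y *m A) 0 j = 0) -> submx_of hI hJ A \notin unitmx.
Proof.
move=> y0 ysup yA; subst k; rewrite unitmxE unitfE negbK; apply/det0P.
exists (\row_i y 0 (enum_val i)).
  apply: contra y0 => /eqP u0; apply/eqP/rowP => j; rewrite mxE.
  case: (boolP (j \in I)) => jI; last by rewrite ysup.
  have := congr1 (fun v : 'rV_#|I| => v 0 (enum_rank_in jI j)) u0.
  by rewrite !mxE enum_rankK_in.
apply/rowP => i; rewrite [RHS]mxE -[RHS](yA _ (enum_valP (cast_ord (esym hJ) i))) !mxE.
rewrite [RHS](bigID (fun j => j \in I)) /= [X in _ = _ + X]big1; last first.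
  by move=> j /ysup ->; rewrite mul0r.
rewrite [RHS]addr0 [RHS](big_enum_val (fun j => y 0 j * A j _)) /=.
by apply: eq_bigr => l _; rewrite !mxE cast_ord_id.

Qed.

Lemma sub_sing (F : fieldType) n (I J : {set 'I_n}) k (hI : #|I| = k)
  (hJ : #|J| = k) (A : 'M[F]_n) :
  submx_of hI hJ A \notin unitmx ->
  exists2 y : 'rV_n, y != 0 & (forall j, j \notin I -> y 0 j = 0) /\
  (forall j, j \in J -> (y *m A) 0 j = 0).
Proof.
subst k; rewrite unitmxE unitfE negbK => /det0P [u u0 uB].
have dl : forall l m : 'I_#|I|, (enum_val l == enum_val m :> 'I_n) = (l == m).
  by move=> l m; apply/eqP/eqP => [/enum_val_inj|->].


exists (\row_j \sum_l u 0 l * (enum_val l == j)%:R).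
  apply: contra u0 => /eqP y0; apply/eqP/rowP => i.
  have := congr1 (fun v : 'rV_n => v 0 (enum_val i)) y0; rewrite !mxE => e.
  rewrite -[RHS]e.
  rewrite (bigD1 i) //= eqxx mulr1 big1 ?addr0 //.
  by move=> l /negbTE li; rewrite dl li mulr0.
split.
  move=> j jI; rewrite mxE big1 // => l _.
  case: eqP => [e|_]; last by rewrite mulr0.
  by move: jI; rewrite -e enum_valP.
move=> j jJ.
have -> : j = enum_val (cast_ord (esym hJ) (cast_ord hJ (enum_rank_in jJ j))).
  by rewrite cast_ordK enum_rankK_in.
set i := cast_ord hJ _.
have := congr1 (fun v : 'rV_#|I| => v 0 i) uB; rewrite !mxE => e.
rewrite -[RHS]e.
under eq_bigr do rewrite mxE mulr_suml.
rewrite exchange_big /=; apply: eq_bigr => l _.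
rewrite (bigD1 (enum_val l)) //= eqxx mulr1 big1 ?addr0; last first.
  by move=> m /negbTE ml; rewrite eq_sym ml mulr0 mul0r.
by rewrite !mxE cast_ord_id.
Qed.

Theorem theorem2p24 (F : finFieldType) (s t : nat) (M : 'M[F]_s) :
  (t <= s)%N -> linear_AONT t M -> linear_AONT (s - t) (invmx M).
Proof.
move=> ts [Mu HM]; split; first by rewrite unitmx_inv.
move=> I J hI hJ; apply: contraT => hN.
have [y y0 [ysup yA]] := @sub_sing _ _ _ _ _ hI hJ _ hN.
set z := y *m invmx M.
have zM : z *m M = y by rewrite -mulmxA mulVmx // mulmx1.
have hI' : #|~: J| = t.
  have := cardsC J; rewrite card_ord hJ => e; apply/eqP.
  rewrite -(eqn_add2l (s - t)) e subnK //.
have hJ' : #|~: I| = t.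
  have := cardsC I; rewrite card_ord hI => e; apply/eqP.
  rewrite -(eqn_add2l (s - t)) e subnK //.
suff : submx_of hI' hJ' M \notin unitmx by rewrite HM.
apply: (@sing_sub _ _ _ _ _ hI' hJ' M z).
- by apply: contra y0 => /eqP z0; rewrite -zM z0 mul0mx.
- by move=> j; rewrite in_setC negbK => /yA.
- by move=> j; rewrite in_setC zM => /ysup.
Qed.
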